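(* Suppose $k$ is a local field, $X$ a topological space, and $A$ a Banach $k$-algebra. Then every injective unital $k$-algebra homomorphism $\phi:C_{bd}(X,k)\to A$ whose image is closed in $A$ is continuous with respect to the supremum norm on $C_{bd}(X,k)$. In particular, if $V$ is a $k$-Banach space and $\rho:C_{bd}(X,k)\to\mathcal B_k(V)$ is an injective $k$-algebra homomorphism into the bounded operators with closed image, then $\rho$ is bounded.
   Context: A local field means a complete discretely valued field with finite residue field. $C_{bd}(X,k)$ is the $k$-algebra of bounded continuous functions $X\to k$ with the supremum norm. A Banach $k$-algebra is a unital $k$-algebra with a complete norm satisfying $\|f+g\|\le\max(\|f\|,\|g\|)$, $\|fg\|\le\|f\|\|g\|$, $\|af\|=|a|\|f\|$ for $a\in k$, and $\|1\|=1$. For a non-Archimedean $k$-Banach space $V$, $\mathcal B_k(V)$ is the Banach $k$-algebra of bounded $k$-linear operators on $V$ with operator norm. *)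

(* Defs.v *)
From HB Require Import structures.
From mathcomp Require Import all_boot all_order all_algebra.
From Stdlib Require Import Reals.
Set Implicit Arguments. Unset Strict Implicit. Unset Printing Implicit Defensive.
Import GRing.Theory.
Local Open Scope ring_scope.

Definition nonarch_abs (k : fieldType) (av : k -> R) : Prop :=
  [/\ (forall x, Rle R0 (av x)),
      (forall x, av x = R0 <-> x = 0),
      (forall x y, av (x * y) = Rmult (av x) (av y)) &
      (forall x y, Rle (av (x + y)) (Rmax (av x) (av y)))].

Definition cauchy_seq (T : Type) (d : T -> T -> R) (u : nat -> T) : Prop :=
  forall eps, Rlt R0 eps -> exists N : nat,
    forall m n, leq N m -> leq N n -> Rlt (d (u m) (u n)) eps.

Definition converges_to (T : Type) (d : T -> T -> R) (u : nat -> T) (l : T) : Prop :=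
  forall eps, Rlt R0 eps -> exists N : nat,
    forall n, leq N n -> Rlt (d (u n) l) eps.

Definition complete_metric (T : Type) (d : T -> T -> R) : Prop :=
  forall u, cauchy_seq d u -> exists l, converges_to d u l.

Definition local_field (k : fieldType) (av : k -> R) : Prop :=
  [/\ nonarch_abs av,
      complete_metric (fun x y : k => av (x - y)),
      (exists pi : k, ([/\ Rlt R0 (av pi), Rlt (av pi) R1 &
          (forall x : k, x != 0 -> exists n : Z, av x = powerRZ (av pi) n)])) &
      (* residue field {|x|<=1}/{|x|<1} is finite *)
      (exists s : seq k, forall x : k, Rle (av x) R1 ->
          exists2 a, a \in s & Rlt (av (x - a)) R1)].

Definition open_in_k (k : fieldType) (av : k -> R) (U : k -> Prop) : Prop :=
  forall y, U y -> exists r, Rlt R0 r /\ forall z, Rlt (av (z - y)) r -> U z.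

Definition is_topology (X : Type) (opn : (X -> Prop) -> Prop) : Prop :=
  [/\ opn (fun _ => True),
      opn (fun _ => False),
      (forall U V, opn U -> opn V -> opn (fun x => U x /\ V x)) &
      (forall F : (X -> Prop) -> Prop, (forall U, F U -> opn U) ->
          opn (fun x => exists U, F U /\ U x))].

Definition continuous_to_k (X : Type) (opn : (X -> Prop) -> Prop)
  (k : fieldType) (av : k -> R) (f : X -> k) : Prop :=
  forall U, open_in_k av U -> opn (fun x => U (f x)).

Definition bounded_fun (X : Type) (k : fieldType) (av : k -> R) (f : X -> k) : Prop :=
  exists M, forall x, Rle (av (f x)) M.

Definition Cbd (X : Type) (opn : (X -> Prop) -> Prop)
  (k : fieldType) (av : k -> R) (f : X -> k) : Prop :=
  continuous_to_k opn av f /\ bounded_fun av f.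

Definition supnorm_le (X : Type) (k : fieldType) (av : k -> R) (f : X -> k) (r : R) : Prop :=
  forall x, Rle (av (f x)) r.

Definition banach_algebra_norm (k : fieldType) (av : k -> R) (A : algType k)
  (nA : A -> R) : Prop :=
  (forall x, Rle R0 (nA x)) /\
  (forall x, nA x = R0 <-> x = 0) /\
  (forall x y, Rle (nA (x + y)) (Rmax (nA x) (nA y))) /\
  (forall x y, Rle (nA (x * y)) (Rmult (nA x) (nA y))) /\
  (forall (a : k) x, nA (a *: x) = Rmult (av a) (nA x)) /\
  nA 1 = R1 /\
  complete_metric (fun x y : A => nA (x - y)).

Definition closed_in_normed (T : zmodType) (n : T -> R) (S : T -> Prop) : Prop :=
  forall y, ~ S y -> exists r, Rlt R0 r /\ forall z, Rlt (n (z - y)) r -> ~ S z.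

Definition banach_space_norm (k : fieldType) (av : k -> R) (V : lmodType k)
  (nV : V -> R) : Prop :=
  [/\ (forall x, Rle R0 (nV x)),
      (forall x, nV x = R0 <-> x = 0),
      (forall x y, Rle (nV (x + y)) (Rmax (nV x) (nV y))),
      (forall (a : k) x, nV (a *: x) = Rmult (av a) (nV x)) &
      complete_metric (fun x y : V => nV (x - y))].

Definition bounded_op (k : fieldType) (V : lmodType k) (nV : V -> R) (T : V -> V) : Prop :=
  [/\ (forall x y, T (x + y) = T x + T y),
      (forall (a : k) x, T (a *: x) = a *: T x) &
      (exists C, forall v, Rle (nV (T v)) (Rmult C (nV v)))].

Definition opnorm_le (k : fieldType) (V : lmodType k) (nV : V -> R) (T : V -> V) (r : R) : Prop :=
  forall v, Rle (nV (T v)) (Rmult r (nV v)).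

Definition opnorm_lt (k : fieldType) (V : lmodType k) (nV : V -> R) (T : V -> V) (r : R) : Prop :=
  exists r', Rlt r' r /\ opnorm_le nV T r'.

(* Main.v *)
Require Import Defs.
From HB Require Import structures.
From mathcomp Require Import all_boot all_order all_algebra.
From mathcomp Require Import boolp functions.
From Stdlib Require Import Reals Lra.
From Stdlib Require Import Classical FunctionalExtensionality PropExtensionality ClassicalEpsilon.
From mathcomp Require Import ring.
Import GRing.Theory.
Set Implicit Arguments. Unset Strict Implicit.

Section RealFacts.
Local Open Scope R_scope.

Lemma pow_small (q : R) : 0 <= q -> q < 1 -> forall eps, 0 < eps ->
  exists N : nat, forall n : nat, leq N n -> q ^ n < eps.
Proof.
move=> q0 q1 eps he.
have [|N HN] := pow_lt_1_zero q _ eps he; first by rewrite Rabs_pos_eq //.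
exists N => n /leP Hn; have := HN n Hn.
by rewrite Rabs_pos_eq //; apply: pow_le.
Qed.

Lemma pow_decr (q : R) : 0 <= q -> q <= 1 -> forall m n : nat, leq m n -> q ^ n <= q ^ m.
Proof.
move=> q0 q1 m n /leP; elim=> [|n' _ IH]; first lra.
simpl. have := pow_le q n' q0. nra.
Qed.

Lemma le_of_max_eps (a b : R) : 0 <= b -> (forall eta, 0 < eta -> a <= Rmax b eta) -> a <= b.
Proof.
move=> b0 H; apply: Rnot_lt_le => ab.
have := H ((a + b)/2) ltac:(lra).
rewrite Rmax_right; lra.
Qed.

Lemma le_of_eps (a b : R) : (forall eta, 0 < eta -> a <= b + eta) -> a <= b.
Proof.
move=> H; apply: Rnot_lt_le => ab.
have := H ((a - b)/2) ltac:(lra). lra.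
Qed.

End RealFacts.

Section File_P2.
Local Open Scope ring_scope.

Section AV.
Variables (k : fieldType) (av : k -> R).
Hypothesis hna : nonarch_abs av.

Lemma av_ge0 x : Rle R0 (av x). Proof. by case: hna. Qed.
Lemma av_eq0 x : av x = R0 <-> x = 0. Proof. by case: hna. Qed.
Lemma avM x y : av (x * y) = Rmult (av x) (av y). Proof. by case: hna. Qed.
Lemma avD x y : Rle (av (x + y)) (Rmax (av x) (av y)). Proof. by case: hna. Qed.
Lemma av0 : av 0 = R0. Proof. by apply/av_eq0. Qed.
Lemma av1 : av 1 = R1.
Proof.
have h := avM 1 1; rewrite mulr1 in h.
have : av 1 <> R0 by move/av_eq0; apply/eqP; exact: oner_neq0.
move: h; generalize (av 1) => a h ha; nra.
Qed.
Lemma avN x : av (- x) = av x.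
Proof.
have h1 : av (-1) = R1.
  have h := avM (-1) (-1); rewrite mulrNN mulr1 av1 in h.
  have := av_ge0 (-1); move: h; generalize (av (-1)) => a; nra.
by rewrite -mulN1r avM h1 Rmult_1_l.
Qed.
Lemma av_subC x y : av (x - y) = av (y - x).
Proof. by rewrite -avN opprB. Qed.
Lemma avB x y : Rle (av (x - y)) (Rmax (av x) (av y)).
Proof. by rewrite -(avN y); apply: avD. Qed.
Lemma av_tri x y z : Rle (av (x - z)) (Rmax (av (x - y)) (av (y - z))).
Proof. by have := avD (x - y) (y - z); rewrite addrA subrK. Qed.
Lemma avV x : x != 0 -> av (x^-1) = Rinv (av x).
Proof.
move=> x0; have h := avM x (x^-1); rewrite mulfV // av1 in h.
have : av x <> R0 by move/av_eq0/eqP; rewrite (negbTE x0).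
move=> hx; apply: (Rmult_eq_reg_l (av x)) => //; by rewrite -h Rinv_r.
Qed.
Lemma avX x n : av (x ^+ n) = pow (av x) n.
Proof. by elim: n => [|n IH]; rewrite ?expr0 ?av1 // exprS avM IH. Qed.
Lemma av_lt_max a b r : Rlt (av a) r -> Rlt (av b) r -> Rlt (av (a + b)) r.
Proof. move=> ha hb; apply: Rle_lt_trans (avD a b) _; exact: Rmax_lub_lt. Qed.

End AV.

End File_P2.
Section File_P3.
Local Open Scope ring_scope.

Section Topo.
Variables (k : fieldType) (av : k -> R).
Hypothesis hna : nonarch_abs av.
Variables (X : Type) (opn : (X -> Prop) -> Prop).
Hypothesis hX : is_topology opn.

Lemma opn_ext (U V : X -> Prop) : opn U -> (forall x, U x <-> V x) -> opn V.
Proof.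
move=> hU h; have -> : V = U; last by [].
apply: functional_extensionality => x; apply: propositional_extensionality.
by split => /h.
Qed.

Lemma opn_local (W : X -> Prop) :
  (forall x, W x -> exists U, [/\ opn U, U x & forall y, U y -> W y]) -> opn W.
Proof.
move=> h; case: hX => _ _ _ hunion.
pose F := fun U : X -> Prop => opn U /\ forall y, U y -> W y.
have hF : forall U, F U -> opn U by move=> U [].
have := hunion F hF => hO.
apply: (@opn_ext _ W hO) => x; split.
  by case=> U [[_ hUW] hUx]; exact: hUW.
move=> /h [U [hU hUx hUW]]; exists U; split => //; split => //.
Qed.

Lemma opn_and (U V : X -> Prop) : opn U -> opn V -> opn (fun x => U x /\ V x).
Proof. by case: hX => _ _ h _; apply: h. Qed.

Lemma open_ball (c : k) (r : R) : open_in_k av (fun z => Rlt (av (z - c)) r).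
Proof.
move=> y hy; exists r; split.
  exact: (Rle_lt_trans _ _ _ (av_ge0 hna _) hy).
move=> z hz; apply: Rle_lt_trans (av_tri hna z y c) _; exact: Rmax_lub_lt.
Qed.

Lemma cont_ball f : continuous_to_k opn av f -> forall c r,
  opn (fun x => Rlt (av (f x - c)) r).
Proof. move=> hf c r; exact: (hf _ (@open_ball c r)). Qed.

Lemma cont_of_local (f : X -> k) :
  (forall x r, Rlt R0 r -> exists U, [/\ opn U, U x &
      forall y, U y -> Rlt (av (f y - f x)) r]) -> continuous_to_k opn av f.
Proof.
move=> h U hU; apply: opn_local => x hx.
have [r [r0 hr]] := hU _ hx.
have [V [hV hVx hVr]] := h x r r0.
exists V; split => // y /hVr; exact: hr.
Qed.

Lemma Cbd_const c : Cbd opn av (fun _ => c).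
Proof.
split; last by exists (av c) => x; apply: Rle_refl.
apply: cont_of_local => x r r0; exists (fun _ => True); split => //.
  by case: hX.
by move=> y _; rewrite subrr (av0 hna).
Qed.

Lemma Cbd_add f g : Cbd opn av f -> Cbd opn av g -> Cbd opn av (fun x => f x + g x).
Proof.
move=> [hf [Mf bf]] [hg [Mg bg]]; split; last first.
  exists (Rmax Mf Mg) => x; apply: Rle_trans (avD hna _ _) _.
  apply: Rmax_lub; [apply: Rle_trans (Rmax_l _ Mg)|apply: Rle_trans (Rmax_r Mf _)] => //.
apply: cont_of_local => x r r0.
exists (fun y => Rlt (av (f y - f x)) r /\ Rlt (av (g y - g x)) r); split.
- by apply: opn_and; apply: cont_ball.
- by rewrite !subrr (av0 hna).
move=> y [h1 h2].
have -> : f y + g y - (f x + g x) = (f y - f x) + (g y - g x) by rewrite opprD addrACA.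
exact: av_lt_max.
Qed.

Lemma Cbd_scal (a : k) f : Cbd opn av f -> Cbd opn av (fun x => a * f x).
Proof.
move=> [hf [Mf bf]]; split; last first.
  exists (Rmult (av a) Mf) => x; rewrite (avM hna).
  apply: Rmult_le_compat_l => //; exact: av_ge0.
apply: cont_of_local => x r r0.
exists (fun y => Rlt (av (f y - f x)) (Rdiv r (av a + 1))); split.
- exact: cont_ball.
- rewrite subrr (av0 hna); have := av_ge0 hna a => ha.
  apply: Rdiv_lt_0_compat; lra.
move=> y hy; rewrite -mulrBr (avM hna).
have ha := av_ge0 hna a; have hb := av_ge0 hna (f y - f x).
move: hy; set b := av (f y - f x) => hy.
have hy' : Rlt (Rmult b (av a + 1)) r.
  apply: (Rmult_lt_reg_r (/ (av a + 1))); first (apply: Rinv_0_lt_compat; lra).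
  move: hy; rewrite /Rdiv; have : (av a + 1 <> 0)%R by lra.
  move=> hne hy; rewrite Rmult_assoc Rinv_r // Rmult_1_r //.
nra.
Qed.

Lemma Cbd_opp f : Cbd opn av f -> Cbd opn av (fun x => - f x).
Proof.
move=> hf; have := Cbd_scal (-1) hf.
by have -> : (fun x => -1 * f x) = (fun x => - f x) by apply: functional_extensionality => x; rewrite mulN1r.
Qed.

Lemma Cbd_sub f g : Cbd opn av f -> Cbd opn av g -> Cbd opn av (fun x => f x - g x).
Proof. by move=> hf hg; apply: Cbd_add => //; apply: Cbd_opp. Qed.

Lemma Cbd_mul f g : Cbd opn av f -> Cbd opn av g -> Cbd opn av (fun x => f x * g x).
Proof.
move=> [hf [Mf bf]] [hg [Mg bg]]; split; last first.
  exists (Rmult (Rmax Mf 0) (Rmax Mg 0)) => x; rewrite (avM hna).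
  apply: Rmult_le_compat; try exact: av_ge0.
    by apply: Rle_trans (bf x) (Rmax_l _ _).
  by apply: Rle_trans (bg x) (Rmax_l _ _).
apply: cont_of_local => x r r0.
have hF : Rle 0 (av (f x)) by apply: av_ge0.
have hG : Rle 0 (av (g x)) by apply: av_ge0.
set s := Rmin 1 (Rdiv r (av (f x) + av (g x) + 2)).
have hs0 : Rlt 0 s.
  apply: Rmin_pos; first lra; apply: Rdiv_lt_0_compat; lra.
have hs1 : Rle s 1 by apply: Rmin_l.
have hs2 : Rle (Rmult s (av (f x) + av (g x) + 2)) r.
  have : Rle s (Rdiv r (av (f x) + av (g x) + 2)) by apply: Rmin_r.
  move=> h; apply: Rle_trans (Rmult_le_compat_r _ _ _ _ h) _; first lra.
  rewrite /Rdiv Rmult_assoc Rinv_l; lra.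
clearbody s.
exists (fun y => Rlt (av (f y - f x)) s /\ Rlt (av (g y - g x)) s); split.
- by apply: opn_and; apply: cont_ball.
- by rewrite !subrr (av0 hna).
move=> y [h1 h2].
have -> : f y * g y - f x * g x = (f y - f x) * g y + f x * (g y - g x).
  by rewrite mulrBl mulrBr addrA subrK.
have hgy : Rle (av (g y)) (av (g x) + 1).
  have -> : g y = (g y - g x) + g x by rewrite subrK.
  apply: Rle_trans (avD hna _ _) _; apply: Rmax_lub.
  lra. lra.
apply: av_lt_max => //; rewrite (avM hna).
- have := av_ge0 hna (f y - f x); have := av_ge0 hna (g y); nra.
- have := av_ge0 hna (g y - g x); nra.
Qed.

End Topo.

End File_P3.
Section File_P4.
Local Open Scope ring_scope.

Section Complete.
Variables (k : fieldType) (av : k -> R).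
Hypothesis hna : nonarch_abs av.
Hypothesis hcomp : complete_metric (fun x y : k => av (x - y)).
Variables (X : Type) (opn : (X -> Prop) -> Prop).
Hypothesis hX : is_topology opn.

Lemma Cbd_complete (u : nat -> X -> k) :
  (forall n, Cbd opn av (u n)) ->
  (forall eps, Rlt R0 eps -> exists N : nat, forall m n, leq N m -> leq N n ->
     forall x, Rle (av (u m x - u n x)) eps) ->
  exists l, Cbd opn av l /\ forall eps, Rlt R0 eps -> exists N : nat,
     forall n, leq N n -> forall x, Rle (av (u n x - l x)) eps.
Proof.
move=> hu hC.
have hl : forall x, exists l, converges_to (fun a b : k => av (a - b)) (fun n => u n x) l.
  move=> x; apply: hcomp => eps he.
  have [N hN] := hC (Rdiv eps 2) ltac:(lra).
  exists N => m n hm hn; apply: Rle_lt_trans (hN m n hm hn x) _; lra.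
have [l hl'] := boolp.choice hl.
have hunif : forall eps, Rlt R0 eps -> exists N : nat,
     forall n, leq N n -> forall x, Rle (av (u n x - l x)) eps.
  move=> eps he; have [N hN] := hC eps he; exists N => n hn x.
  apply: le_of_max_eps; first lra.
  move=> eta heta; have [N' hN'] := hl' x eta heta.
  have hm1 : leq N (maxn N N') by apply: leq_maxl.
  have hm2 : leq N' (maxn N N') by apply: leq_maxr.
  apply: Rle_trans (av_tri hna _ (u (maxn N N') x) _) _.
  apply: Rmax_lub.
    by apply: Rle_trans (hN _ _ hn hm1 x) (Rmax_l _ _).
  by apply: Rle_trans (Rmax_r _ _); left; apply: hN'.
exists l; split => //; split.
  apply: (cont_of_local hX) => x r r0.
  have [N hN] := hunif (Rdiv r 2) ltac:(lra).
  exists (fun y => Rlt (av (u N y - u N x)) r); split.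
  - by apply: (cont_ball hna); case: (hu N).
  - by rewrite subrr (av0 hna).
  move=> y hy.
  have -> : l y - l x = (l y - u N y) + ((u N y - u N x) + (u N x - l x)).
    by rewrite addrA [_ + (u N y - _)]addrA subrK addrA subrK.
  apply: av_lt_max => //.
    rewrite (av_subC hna); apply: Rle_lt_trans (hN N (leqnn N) y) _; lra.
  apply: av_lt_max => //.
  apply: Rle_lt_trans (hN N (leqnn N) x) _; lra.
have [N hN] := hunif R1 Rlt_0_1.
case: (hu N) => _ [M hM].
exists (Rmax M R1) => x.
have -> : l x = u N x - (u N x - l x) by rewrite opprB addrC subrK.
apply: Rle_trans (avB hna _ _) _.
apply: Rmax_lub.
  by apply: Rle_trans (hM x) (Rmax_l _ _).
by apply: Rle_trans (hN N (leqnn N) x) (Rmax_r _ _).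
Qed.

End Complete.

End File_P4.
Section File_P5.
Local Open Scope ring_scope.

Section Core.
Variables (k : fieldType) (av : k -> R).
Hypothesis hna : nonarch_abs av.
Hypothesis hcomp : complete_metric (fun x y : k => av (x - y)).
Variable pi : k.
Hypotheses (hpi0 : Rlt R0 (av pi)) (hpi1 : Rlt (av pi) R1).
Variables (X : Type) (opn : (X -> Prop) -> Prop).
Hypothesis hX : is_topology opn.
Variables (A : zmodType) (N : A -> R -> Prop).
Hypothesis Nge0 : forall {a r}, N a r -> Rle R0 r.
Hypothesis Nmono : forall {a r s}, N a r -> Rle r s -> N a s.
Hypothesis Nadd : forall {a b r s}, N a r -> N b s -> N (a + b) (Rmax r s).
Hypothesis Nopp : forall {a r}, N a r -> N (- a) r.
Hypothesis N0 : N 0 R0.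
Hypothesis Nzero : forall a, (forall r, Rlt R0 r -> N a r) -> a = 0.
Hypothesis Ncomp : forall u : nat -> A,
  (forall eps, Rlt R0 eps -> exists M : nat, forall m n, leq M m -> leq M n -> N (u m - u n) eps) ->
  exists l, forall eps, Rlt R0 eps -> exists M : nat, forall n, leq M n -> N (u n - l) eps.
Variable phi : (X -> k) -> A.
Local Notation C := (Cbd opn av).
Hypothesis phiD : forall {f g}, C f -> C g -> phi (fun x => f x + g x) = phi f + phi g.
Hypothesis phiM : forall {f g r s}, C f -> C g -> N (phi f) r -> N (phi g) s ->
  N (phi (fun x => f x * g x)) (Rmult r s).
Hypothesis phiZ : forall (a : k) {f r}, C f -> N (phi f) r -> N (phi (fun x => a * f x)) (Rmult (av a) r).
Hypothesis phiB : forall {f}, C f -> exists r, N (phi f) r.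
Hypothesis phiI : forall {f g}, C f -> C g -> phi f = phi g -> f = g.
Hypothesis phiC : forall l, (forall eps, Rlt R0 eps -> exists f, C f /\ N (phi f - l) eps) ->
  exists h, C h /\ phi h = l.

Definition SB (f : X -> k) (r : R) := forall x, Rle (av (f x)) r.

Lemma C0 : C (fun _ => 0). Proof. exact: Cbd_const. Qed.

Lemma phi0 : phi (fun _ => 0) = 0.
Proof.
have h := phiD C0 C0.
have e : (fun x : X => (0 : k) + 0) = (fun _ => 0) by apply: functional_extensionality => x; rewrite addr0.
rewrite e in h; apply/eqP; rewrite -(subrr (phi (fun _ => 0))) {2}h.
by rewrite addrK.
Qed.

Lemma phiN f : C f -> phi (fun x => - f x) = - phi f.
Proof.
move=> hf; have h := phiD hf (Cbd_opp hna hX hf).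
have e : (fun x => f x + - f x) = (fun _ => 0) by apply: functional_extensionality => x; rewrite subrr.
rewrite e phi0 in h; by apply: (addrI (phi f)); rewrite -h subrr.
Qed.

Lemma phiB' f g : C f -> C g -> phi (fun x => f x - g x) = phi f - phi g.
Proof. by move=> hf hg; rewrite (phiD hf (Cbd_opp hna hX hg)) phiN. Qed.

Lemma phi_ext f g : (forall x, f x = g x) -> phi f = phi g.
Proof. by move=> h; rewrite (functional_extensionality _ _ h). Qed.

Lemma tail_cvg (u : nat -> A) (c : nat -> R) :
  (forall n j, N (u (addn n j) - u n) (c n)) ->
  (forall eps, Rlt R0 eps -> exists M : nat, forall n, leq M n -> Rle (c n) eps) ->
  exists l, forall eps, Rlt R0 eps -> exists M : nat, forall n, leq M n -> N (u n - l) eps.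
Proof.
move=> ht hc; apply: Ncomp => eps he.
have [M hM] := hc eps he; exists M => m n hm hn.
case: (leqP n m) => hnm.
  rewrite -(subnKC hnm); apply: Nmono (ht n (subn m n)) _; exact: hM.
rewrite -(subnKC (ltnW hnm)) -opprB; apply: Nopp; apply: Nmono (ht m (subn n m)) _; exact: hM.
Qed.


Let Cadd {f g} := @Cbd_add _ _ hna _ _ hX f g.
Let Csub {f g} := @Cbd_sub _ _ hna _ _ hX f g.
Let Cmul {f g} := @Cbd_mul _ _ hna _ _ hX f g.
Let Cscal a {f} := @Cbd_scal _ _ hna _ _ hX a f.
Let Cconst c := @Cbd_const _ _ hna _ _ hX c.

Lemma charle f r x : C f -> N (phi f) r -> Rle (av (f x)) r.
Proof.
move=> hf hN; apply: Rnot_lt_le => hlt.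
have r0 := Nge0 hN.
set lam := f x in hlt.
have lam0 : lam != 0.
  apply/eqP => e; rewrite e (av0 hna) in hlt; lra.
set mu := lam^-1.
pose g := fun y => mu * f y.
have hg : C g := Cscal mu hf.
set q := Rmult (av mu) r.
have hq : N (phi g) q := phiZ mu hf hN.
have hlam : Rlt R0 (av lam) by lra.
have q0 : Rle R0 q by apply: Rmult_le_pos => //; apply: av_ge0.
have q1 : Rlt q R1.
  rewrite /q /mu (avV hna lam0).
  apply: (Rmult_lt_reg_l (av lam)) => //.
  rewrite -Rmult_assoc Rinv_r; lra.
pose w := fix w (n : nat) : X -> k := if n is n'.+1 then (fun y => g y * w n' y) else g.
have hw : forall n, C (w n) /\ N (phi (w n)) (pow q n.+1).
  elim=> [|n [IH1 IH2]].
    by split => //; apply: Nmono hq _; rewrite /= Rmult_1_r; apply: Rle_refl.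
  by split; [apply: Cmul | apply: phiM].
pose T := fix T (n : nat) : X -> k := if n is n'.+1 then (fun y => T n' y + w n' y) else (fun _ => 0).
have hT : forall n, C (T n).
  by elim=> [|n IH]; [apply: Cconst | apply: Cadd => //; case: (hw n)].
have htail : forall n j, N (phi (T (addn n j)) - phi (T n)) (pow q n.+1).
  move=> n; elim=> [|j IH].
    rewrite addn0 subrr; apply: Nmono N0 _; exact: pow_le.
  rewrite addnS.
  have -> : phi (T (addn n j).+1) = phi (T (addn n j)) + phi (w (addn n j)).
    by apply: phiD; [apply: hT | case: (hw (addn n j))].
  rewrite addrAC; apply: Nmono (Nadd IH (proj2 (hw (addn n j)))) _.
  apply: Rmax_lub; first by apply: Rle_refl.
  by apply: pow_decr => //; [lra | rewrite ltnS leq_addr].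
have [l hl] : exists l, forall eps, Rlt R0 eps -> exists M : nat, forall n, leq M n ->
    N (phi (T n) - l) eps.
  apply: (tail_cvg htail) => eps he.
  have [M hM] := pow_small q0 q1 he; exists M => n hn.
  left; apply: hM; exact: (leq_trans hn).
have [h [hh hhl]] : exists h, C h /\ phi h = l.
  apply: phiC => eps he; have [M hM] := hl eps he.
  by exists (T M); split => //; apply: hM.
have hconv : forall eps, Rlt R0 eps -> exists M : nat, forall n, leq M n ->
    N (phi h - phi (T n)) eps.
  move=> eps he; have [M hM] := hl eps he; exists M => n hn.
  by rewrite hhl -opprB; apply: Nopp; apply: hM.
pose e := fun y => 1 - g y.
have he : C e by apply: Csub => //; apply: Cconst.
pose F := fun y => e y * (1 + h y).
have hF : C F by apply: Cmul => //; apply: Cadd => //; apply: Cconst.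
have ident : forall n y, w n y = 1 - e y * (1 + T n y).
  move=> n y; elim: n => [|n IH] /=; first by rewrite /e; ring.
  by rewrite IH /e; ring.
have hF1 : phi F = phi (fun _ => 1).
  apply/eqP; rewrite -subr_eq0; apply/eqP; apply: Nzero => eps heps.
  have [Be hBe] := phiB he.
  have Be0 := Nge0 hBe.
  set del := Rdiv eps (Be + 1).
  have hdel : Rlt R0 del by apply: Rdiv_lt_0_compat; lra.
  have [M1 hM1] := hconv del hdel.
  have [M2 hM2] := pow_small q0 q1 heps.
  set n := maxn M1 M2.
  have hsub : C (fun y => h y - T n y) by apply: Csub.
  rewrite -(phiB' hF (Cconst 1)).
  have -> : phi (fun y => F y - 1) = phi (fun y => e y * (h y - T n y) - w n y).
    apply: phi_ext => y; rewrite ident /F; ring.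
  rewrite (phiB' (Cmul he hsub)); last by case: (hw n).
  have hd : N (phi (fun y => h y - T n y)) del.
    by rewrite (phiB' hh (hT n)); apply: hM1; exact: leq_maxl.
  have h1 := phiM he hsub hBe hd.
  apply: Nmono (Nadd h1 (Nopp (proj2 (hw n)))) _.
  apply: Rmax_lub.
    rewrite /del; apply: (Rmult_le_reg_r (Be + 1)); first lra.
    rewrite Rmult_assoc /Rdiv Rmult_assoc Rinv_l; nra.
  apply: Rle_trans (pow_decr q0 (Rlt_le _ _ q1) (leqnSn n)) _.
  left; apply: hM2; exact: leq_maxr.
have := phiI hF (Cconst 1) hF1 => /(congr1 (fun F => F x)).
rewrite /F /e /g -/lam /mu mulVf // subrr mul0r => /eqP.
by rewrite eq_sym oner_eq0.
Qed.


Lemma SB_sym f g r : SB (fun x => f x - g x) r -> SB (fun x => g x - f x) r.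
Proof. by move=> h x; rewrite (av_subC hna); apply: h. Qed.

Lemma SB_tri f g h r s : SB (fun x => f x - g x) r -> SB (fun x => g x - h x) s ->
  SB (fun x => f x - h x) (Rmax r s).
Proof.
move=> h1 h2 x; apply: Rle_trans (av_tri hna _ (g x) _) _.
apply: Rmax_lub; [apply: Rle_trans (Rmax_l _ _) | apply: Rle_trans (Rmax_r _ _)] => //; auto.
Qed.

Lemma SB_refl f r : Rle R0 r -> SB (fun x => f x - f x) r.
Proof. by move=> hr x; rewrite subrr (av0 hna). Qed.

Lemma baire : exists (n : nat) y0 r, C y0 /\ Rlt R0 r /\
  forall y, C y -> SB (fun x => y x - y0 x) r -> forall eps, Rlt R0 eps ->
   exists g, C g /\ N (phi g) (INR n) /\ SB (fun x => y x - g x) eps.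
Proof.
apply: NNPP => Hno.
have H : forall n y0 r, C y0 -> Rlt R0 r -> exists y, C y /\ SB (fun x => y x - y0 x) r /\
    exists eps, Rlt R0 eps /\ forall g, C g -> N (phi g) (INR n) -> ~ SB (fun x => y x - g x) eps.
  move=> n y0 r hy0 hr; apply: NNPP => Hn; apply: Hno; exists n, y0, r; split => //; split => //.
  move=> y hy hyr eps heps; apply: NNPP => Hg; apply: Hn; exists y; split => //; split => //.
  exists eps; split => // g hg hgn hSB; apply: Hg; by exists g.
pose S := {p : (X -> k) * R | C p.1 /\ Rlt R0 p.2}.
pose Rel := fun (n : nat) (s s' : S) =>
  Rle (sval s').2 (Rdiv (sval s).2 2) /\ SB (fun x => (sval s').1 x - (sval s).1 x) (Rdiv (sval s).2 2) /\
  forall z, C z -> SB (fun x => z x - (sval s').1 x) (sval s').2 ->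
    forall g, C g -> N (phi g) (INR n) -> ~ SB (fun x => z x - g x) (sval s').2.
have step : forall ns : nat * S, exists s' : S, Rel ns.1 ns.2 s'.
  case=> n [[y r] [hy hr]] /=; simpl in hy, hr.
  have [y' [hy' [hyy' [eps [heps hE]]]]] := H n y (Rdiv r 2) hy ltac:(lra).
  have hr' : Rlt R0 (Rmin (Rdiv eps 2) (Rdiv r 2)) by apply: Rmin_pos; lra.
  exists (exist _ (y', Rmin (Rdiv eps 2) (Rdiv r 2)) (conj hy' hr')); split => /=.
    exact: Rmin_r.
  split => // z hz h1 g hg hgn h2; apply: (hE g hg hgn).
  have := SB_tri (SB_sym h1) h2; move=> h3 x; apply: Rle_trans (h3 x) _.
  have := Rmin_l (Rdiv eps 2) (Rdiv r 2); rewrite Rmax_left; [lra | apply: Rle_refl].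
have [st hst] := boolp.choice step.
have hs0 : C (fun _ : X => 0) /\ Rlt R0 R1 by split; [exact: C0 | exact: Rlt_0_1].
pose s0 : S := exist _ ((fun _ => 0), R1) hs0.
pose s := fix s (n : nat) : S := if n is n'.+1 then st (n', s n') else s0.
pose y := fun n => (sval (s n)).1.
pose r := fun n => (sval (s n)).2.
have hC : forall n, C (y n) by move=> n; case: (proj2_sig (s n)).
have hr : forall n, Rlt R0 (r n) by move=> n; case: (proj2_sig (s n)).
have hrel : forall n, Rel n (s n) (s n.+1) by move=> n; exact: (hst (n, s n)).
have hr_half : forall n, Rle (r n.+1) (Rdiv (r n) 2) by move=> n; case: (hrel n).
have hr_dec : forall n j, Rle (r (addn n j)) (r n).
  move=> n; elim=> [|j IH]; first by rewrite addn0; apply: Rle_refl.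
  rewrite addnS; have := hr_half (addn n j); have := hr (addn n j); lra.
have hr_small : forall n, Rle (r n) (pow (Rdiv 1 2) n).
  elim=> [|n IH] /=; first by apply: Rle_refl.
  have := hr_half n; lra.
have hdist : forall n j, SB (fun x => y (addn n j) x - y n x) (Rdiv (r n) 2).
  move=> n; elim=> [|j IH]; first by rewrite addn0; apply: SB_refl; have := hr n; lra.
  rewrite addnS; have h1 : SB (fun x => y (addn n j).+1 x - y (addn n j) x) (Rdiv (r (addn n j)) 2).
    by case: (hrel (addn n j)) => _ [].
  move=> x; apply: Rle_trans (SB_tri h1 IH x) _; apply: Rmax_lub; last by apply: Rle_refl.
  have := hr_dec n j; lra.
have [ys [hys hyscv]] : exists l, C l /\ forall eps, Rlt R0 eps -> exists M : nat,
     forall n, leq M n -> forall x, Rle (av (y n x - l x)) eps.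
  apply: (Cbd_complete hna hcomp hX hC) => eps he.
  have [M hM] := @pow_small (Rdiv 1 2) ltac:(lra) ltac:(lra) eps he.
  exists M => m n hm hn x.
  have h1 := hdist M (subn m M); have h2 := hdist M (subn n M).
  rewrite subnKC // in h1; rewrite subnKC // in h2.
  apply: Rle_trans (SB_tri h1 (SB_sym h2) x) _; rewrite Rmax_left; last by apply: Rle_refl.
  have := hr_small M; have := hM M (leqnn M); have := hr M; lra.
have hlim : forall n, SB (fun x => ys x - y n.+1 x) (r n.+1).
  move=> n x; apply: le_of_max_eps; first by left; apply: hr.
  move=> eta heta; have [M hM] := hyscv eta heta.
  set m := maxn M n.+1.
  have h1 := hdist n.+1 (subn m n.+1); rewrite subnKC ?leq_maxr // in h1.
  apply: Rle_trans (SB_tri (SB_sym (fun x => hM m (leq_maxl _ _) x)) h1 x) _.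
  rewrite Rmax_comm; apply: Rmax_lub; last by apply: Rmax_r.
  apply: Rle_trans (Rmax_l _ _); have := hr n.+1; lra.
have [B hB] := phiB hys.
have [n hn] := INR_archimed R1 B Rlt_0_1.
case: (hrel n) => _ [_ hfin].
apply: (hfin ys hys (hlim n) ys hys).
  by apply: Nmono hB _; left; lra.
by apply: SB_refl; left; apply: hr.
Qed.


Lemma sym_step : exists B r, Rle R0 B /\ Rlt R0 r /\
  forall y, C y -> SB y r -> forall eps, Rlt R0 eps ->
   exists g, C g /\ N (phi g) B /\ SB (fun x => y x - g x) eps.
Proof.
have [n [y0 [r [hy0 [hr hP]]]]] := baire.
exists (INR n), r; split; first exact: pos_INR.
split => // y hy hyr eps heps.
have hy1 : C (fun x => y0 x + y x) by apply: Cadd.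
have hy1r : SB (fun x => (y0 x + y x) - y0 x) r by move=> x; rewrite addrC addKr; exact: hyr x.
have [g1 [hg1 [hN1 hS1]]] := hP _ hy1 hy1r eps heps.
have [g2 [hg2 [hN2 hS2]]] := hP _ hy0 (SB_refl y0 (Rlt_le _ _ hr)) eps heps.
exists (fun x => g1 x - g2 x); split; first by apply: Csub.
split.
  rewrite (phiB' hg1 hg2); apply: Nmono (Nadd hN1 (Nopp hN2)) _.
  by rewrite Rmax_left; apply: Rle_refl.
move=> x; have -> : y x - (g1 x - g2 x) = (y0 x + y x - g1 x) - (y0 x - g2 x) by ring.
apply: Rle_trans (avB hna _ _) _; apply: Rmax_lub; auto.
Qed.

Lemma iter_bound B r : Rle R0 B -> Rlt R0 r ->
  (forall y, C y -> SB y r -> forall eps, Rlt R0 eps ->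
   exists g, C g /\ N (phi g) B /\ SB (fun x => y x - g x) eps) ->
  forall y, C y -> SB y r -> N (phi y) (B + 1).
Proof.
move=> hB hr hQ y hy hyr.
have pi0 : pi != 0 by apply/eqP => e; have := hpi0; rewrite e (av0 hna); lra.
set c := pi^-1.
have hc : av c = Rinv (av pi) by rewrite (avV hna pi0).
pose Sy := {y | C y /\ SB y r}.
have step : forall s : Sy, exists p : (X -> k) * Sy,
    [/\ C p.1, N (phi p.1) B & forall x, sval s x = p.1 x + pi * sval p.2 x].
  case=> z [hz hzr] /=.
  have [g [hg [hgN hgS]]] := hQ z hz hzr (Rmult r (av pi)) ltac:(nra).
  have hz' : C (fun x => c * (z x - g x)) by apply: Cscal; apply: Csub.
  have hz'r : SB (fun x => c * (z x - g x)) r.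
    move=> x; rewrite (avM hna) hc.
    apply: (Rmult_le_reg_l (av pi)) => //; rewrite -Rmult_assoc Rinv_r; last lra.
    rewrite Rmult_1_l Rmult_comm; exact: hgS.
  exists (g, exist (fun w => C w /\ SB w r) _ (conj hz' hz'r)); split => // x /=.
  by rewrite mulrA /c mulfV // mul1r addrC subrK.
have [st hst] := boolp.choice step.
pose s0 : Sy := exist _ y (conj hy hyr).
pose sq := fix sq (n : nat) : Sy := if n is n'.+1 then (st (sq n')).2 else s0.
pose gs := fun n => (st (sq n)).1.
pose ys := fun n => sval (sq n).
have hgs : forall n, C (gs n) /\ N (phi (gs n)) B by move=> n; case: (hst (sq n)).
have hys : forall n x, ys n x = gs n x + pi * ys n.+1 x by move=> n; case: (hst (sq n)).
have hysr : forall n, SB (ys n) r by move=> n; case: (proj2_sig (sq n)).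
pose P := fix P (n : nat) : X -> k :=
  if n is n'.+1 then (fun x => P n' x + pi ^+ n' * gs n' x) else (fun _ => 0).
have hPC : forall n, C (P n).
  by elim=> [|n IH]; [apply: Cconst | apply: Cadd => //; apply: Cscal; case: (hgs n)].
have hinv : forall n x, y x = P n x + pi ^+ n * ys n x.
  move=> n x; elim: n => [|n IH]; first by rewrite /= expr0 add0r mul1r.
  rewrite IH hys /= exprS; ring.
have hpow : forall n, Rle (av (pi ^+ n)) R1.
  move=> n; rewrite (avX hna); have := @pow_decr (av pi) ltac:(lra) ltac:(lra) 0 n (leq0n n); simpl; lra.
have hZ : forall n, N (phi (fun x => pi ^+ n * gs n x)) (Rmult (pow (av pi) n) B).
  move=> n; rewrite -(avX hna); case: (hgs n) => h1 h2; exact: phiZ.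
have htail : forall n j, N (phi (P (addn n j)) - phi (P n)) (Rmult (pow (av pi) n) B).
  move=> n; elim=> [|j IH].
    rewrite addn0 subrr; apply: Nmono N0 _; apply: Rmult_le_pos => //; apply: pow_le; lra.
  rewrite addnS.
  have -> : phi (P (addn n j).+1) = phi (P (addn n j)) + phi (fun x => pi ^+ (addn n j) * gs (addn n j) x).
    by apply: phiD => //; apply: Cscal; case: (hgs (addn n j)).
  rewrite addrAC; apply: Nmono (Nadd IH (hZ _)) _.
  apply: Rmax_lub; first by apply: Rle_refl.
  apply: Rmult_le_compat_r => //; apply: pow_decr; [lra | lra | exact: leq_addr].
have [l hl] : exists l, forall eps, Rlt R0 eps -> exists M : nat, forall n, leq M n ->
    N (phi (P n) - l) eps.
  apply: (tail_cvg htail) => eps he.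
  have [M hM] := @pow_small (av pi) ltac:(lra) hpi1 (Rdiv eps (B + 1)) ltac:(apply: Rdiv_lt_0_compat; lra).
  exists M => n hn; have := hM n hn; have := pow_le (av pi) n ltac:(lra).
  move: (pow (av pi) n) => p hp0 hp.
  have : Rle (Rmult p (B + 1)) eps.
    apply: Rle_trans (Rmult_le_compat_r _ _ _ _ (Rlt_le _ _ hp)) _; first lra.
    rewrite /Rdiv Rmult_assoc Rinv_l; lra.
  nra.
have [h [hh hhl]] : exists h, C h /\ phi h = l.
  apply: phiC => eps he; have [M hM] := hl eps he.
  by exists (P M); split => //; apply: hM.
have hyh : y = h.
  apply: functional_extensionality => x; apply/eqP; rewrite -subr_eq0; apply/eqP.
  apply/(av_eq0 hna); apply: Rle_antisym; last exact: av_ge0.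
  apply: le_of_eps => eta heta; rewrite Rplus_0_l.
  have [M1 hM1] := hl eta heta.
  have [M2 hM2] := @pow_small (av pi) ltac:(lra) hpi1 (Rdiv eta r) ltac:(apply: Rdiv_lt_0_compat; lra).
  set n := maxn M1 M2.
  have h1 : Rle (av (h x - P n x)) eta.
    have := hM1 n (leq_maxl _ _); rewrite -opprB -hhl => /Nopp; rewrite opprK.
    rewrite -(phiB' hh (hPC n)) => hN; have := @charle _ eta x (Csub hh (hPC n)) hN; apply.
  have h2 : Rle (av (pi ^+ n * ys n x)) eta.
    rewrite (avM hna) (avX hna).
    have := hM2 n (leq_maxr _ _); have := hysr n x; have := pow_le (av pi) n ltac:(lra).
    move: (pow (av pi) n) => p hp0 hyr' hp.
    have : Rlt (Rmult p r) eta.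
      apply: Rlt_le_trans (Rmult_lt_compat_r _ _ _ hr hp) _.
      rewrite /Rdiv Rmult_assoc Rinv_l; lra.
    have := av_ge0 hna (ys n x); nra.
  have -> : y x - h x = - ((h x - P n x) - pi ^+ n * ys n x) by rewrite (hinv n x); ring.
  rewrite (avN hna); apply: Rle_trans (avB hna _ _) _; exact: Rmax_lub.
rewrite hyh hhl.
have [M hM] := hl R1 Rlt_0_1.
have -> : l = phi (P M) + - (phi (P M) - l) by rewrite opprB addrC subrK.
have hPB : forall n, N (phi (P n)) B.
  elim=> [|n IH].
    have -> : phi (P 0) = 0 by exact: phi0.
    exact: Nmono N0 hB.
  have -> : phi (P n.+1) = phi (P n) + phi (fun x => pi ^+ n * gs n x).
    by apply: phiD => //; apply: Cscal; case: (hgs n).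
  apply: Nmono (Nadd IH (hZ n)) _; apply: Rmax_lub; first by apply: Rle_refl.
  have := hpow n; rewrite (avX hna) => hp; have := pow_le (av pi) n ltac:(lra); nra.
apply: Nmono (Nadd (hPB M) (Nopp (hM M (leqnn M)))) _.
apply: Rmax_lub; lra.
Qed.

Theorem core_bound : exists r M, Rlt R0 r /\ Rle R0 M /\
  forall y, C y -> SB y r -> N (phi y) M.
Proof.
have [B [r [hB [hr hQ]]]] := sym_step.
exists r, (B + 1)%R; split => //; split; first lra.
exact: iter_bound.
Qed.

Lemma scale_bound r M a : (forall y, C y -> SB y r -> N (phi y) M) -> a != 0 ->
  forall y, C y -> SB y (Rmult (av a) r) -> N (phi y) (Rmult (av a) M).
Proof.
move=> hb a0 y hy hyr.
have hz : C (fun x => a^-1 * y x) by apply: Cscal.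
have ha : Rlt R0 (av a).
  have := av_ge0 hna a; have : av a <> R0 by move/(av_eq0 hna)/eqP; rewrite (negbTE a0).
  lra.
have hzr : SB (fun x => a^-1 * y x) r.
  move=> x; rewrite (avM hna) (avV hna a0).
  apply: (Rmult_le_reg_l (av a)) => //; rewrite -Rmult_assoc Rinv_r; last lra.
  rewrite Rmult_1_l; exact: hyr.
have := phiZ a hz (hb _ hz hzr).
have -> : (fun x => a * (a^-1 * y x)) = y.
  by apply: functional_extensionality => x; rewrite mulrA mulfV // mul1r.
done.
Qed.

End Core.

End File_P5.
Section File_P6.
Local Open Scope ring_scope.

Lemma part1 (k : fieldType) (av : k -> R) (hk : local_field av)
  (X : Type) (opn : (X -> Prop) -> Prop) (hX : is_topology opn)
  (A : algType k) (nA : A -> R) (phi : (X -> k) -> A) :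
     banach_algebra_norm av nA ->
     (forall f g, Cbd opn av f -> Cbd opn av g -> phi (fun x => f x + g x) = phi f + phi g) ->
     (forall f g, Cbd opn av f -> Cbd opn av g -> phi (fun x => f x * g x) = phi f * phi g) ->
     (forall (a : k) f, Cbd opn av f -> phi (fun x => a * f x) = a *: phi f) ->
     phi (fun _ => 1) = 1 ->
     (forall f g, Cbd opn av f -> Cbd opn av g -> phi f = phi g -> f = g) ->
     closed_in_normed nA (fun y => exists f, Cbd opn av f /\ phi f = y) ->
     forall f, Cbd opn av f -> forall eps, Rlt R0 eps ->
       exists delta, Rlt R0 delta /\
         forall g, Cbd opn av g -> supnorm_le av (fun x => f x - g x) delta ->
           Rle (nA (phi f - phi g)) eps.
Proof.
case: hk => hna hcomp [pi [hpi0 hpi1 _]] _.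
move=> [n0 [nz [nD [nM [nZ [n1 ncomp]]]]]] phiD phiM phiZ phi1 phiI hcl.
pose N := fun (a : A) r => Rle (nA a) r.
have nN : forall a, nA (- a) = nA a.
  move=> a; rewrite -scaleN1r nZ.
  have := avN hna 1; rewrite (av1 hna) => ->; lra.
have Nge0 : forall a r, N a r -> Rle R0 r by move=> a r h; apply: Rle_trans (n0 a) h.
have Nmono : forall a r s, N a r -> Rle r s -> N a s by move=> a r s; apply: Rle_trans.
have Nadd : forall a b r s, N a r -> N b s -> N (a + b) (Rmax r s).
  move=> a b r s ha hb; apply: Rle_trans (nD a b) _; apply: Rmax_lub.
    by apply: Rle_trans ha (Rmax_l _ _).
  by apply: Rle_trans hb (Rmax_r _ _).
have Nopp : forall a r, N a r -> N (- a) r by move=> a r; rewrite /N nN.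
have N0 : N 0 R0 by rewrite /N; have [_ ->] := nz 0; [apply: Rle_refl | done].
have Nzero : forall a, (forall r, Rlt R0 r -> N a r) -> a = 0.
  move=> a h; apply/nz; apply: Rle_antisym; last exact: n0.
  apply: le_of_eps => eta he; rewrite Rplus_0_l; exact: h.
have Ncomp : forall u : nat -> A,
  (forall eps, Rlt R0 eps -> exists M : nat, forall m n, leq M m -> leq M n -> N (u m - u n) eps) ->
  exists l, forall eps, Rlt R0 eps -> exists M : nat, forall n, leq M n -> N (u n - l) eps.
  move=> u hu; have [l hl] : exists l, converges_to (fun x y : A => nA (x - y)) u l.
    apply: ncomp => eps he; have [M hM] := hu (Rdiv eps 2) ltac:(lra).
    by exists M => m n hm hn; apply: Rle_lt_trans (hM m n hm hn) _; lra.
  exists l => eps he; have [M hM] := hl eps he; exists M => n hn; left; exact: hM.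
have phiM' : forall f g r s, Cbd opn av f -> Cbd opn av g -> N (phi f) r -> N (phi g) s ->
    N (phi (fun x => f x * g x)) (Rmult r s).
  move=> f g r s hf hg hr hs; rewrite /N phiM //; apply: Rle_trans (nM _ _) _.
  by apply: Rmult_le_compat => //; apply: n0.
have phiZ' : forall (a : k) f r, Cbd opn av f -> N (phi f) r ->
    N (phi (fun x => a * f x)) (Rmult (av a) r).
  move=> a f r hf hr; rewrite /N phiZ // nZ; apply: Rmult_le_compat_l => //; exact: av_ge0.
have phiB : forall f, Cbd opn av f -> exists r, N (phi f) r.
  by move=> f _; exists (nA (phi f)); apply: Rle_refl.
have phiC : forall l, (forall eps, Rlt R0 eps -> exists f, Cbd opn av f /\ N (phi f - l) eps) ->
    exists h, Cbd opn av h /\ phi h = l.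
  move=> l hl; apply: NNPP => hno.
  have [r [hr hball]] := hcl l hno.
  have [f [hf hfl]] := hl (Rdiv r 2) ltac:(lra).
  apply: (hball (phi f)); last by exists f.
  apply: Rle_lt_trans hfl _; lra.
have [r [M [hr [hM hb]]]] := core_bound hna hcomp hpi0 hpi1 hX Nge0 Nmono Nadd Nopp N0 Nzero Ncomp
   phiD phiM' phiZ' phiB phiI phiC.
move=> f hf eps heps.
have q0 : Rle R0 (av pi) by left.
have [n hn] := @pow_small (av pi) q0 hpi1 (Rdiv eps (M + 1)) ltac:(apply: Rdiv_lt_0_compat; lra).
have hpn := pow_lt (av pi) n hpi0.
exists (Rmult (pow (av pi) n) r); split; first by apply: Rmult_lt_0_compat.
move=> g hg hfg.
have pin : pi ^+ n != 0.
  apply: expf_neq0; apply/eqP => e; move: hpi0; rewrite e (av0 hna); lra.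
have hh : Cbd opn av (fun x => f x - g x) by apply: Cbd_sub.
have := scale_bound hna hX phiZ' hb pin hh.
rewrite (avX hna) => /(_ hfg) hN.
have -> : phi f - phi g = phi (fun x => f x - g x).
  have e : f = (fun x => g x + (f x - g x)).
    by apply: functional_extensionality => x; rewrite addrC subrK.
  by rewrite {1}e phiD // addrC addKr.
apply: Rle_trans hN _.
have := hn n (leqnn n).
move: (pow (av pi) n) hpn => p hp0 hp.
have : Rle (Rmult p (M + 1)) eps.
  apply: Rle_trans (Rmult_le_compat_r _ _ _ _ (Rlt_le _ _ hp)) _; first lra.
  rewrite /Rdiv Rmult_assoc Rinv_l; lra.
nra.
Qed.

Lemma pow_interval (k : fieldType) (av : k -> R) (hna : nonarch_abs av) (pi : k)
  (hpi0 : Rlt R0 (av pi)) (hpi1 : Rlt (av pi) R1) (s : R) :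
  Rlt R0 s -> exists a : k, a != 0 /\ Rle s (av a) /\ Rle (av a) (Rdiv s (av pi)).
Proof.
move=> hs.
have pi0 : pi != 0 by apply/eqP => e; move: hpi0; rewrite e (av0 hna); lra.
set q := av pi in hpi0 hpi1 *.
have q0 : Rle R0 q by left.
case: (Rle_lt_dec s R1) => hs1.
  have hex : exists n, `[< Rlt (pow q n) s >].
    have [n hn] := @pow_small q q0 hpi1 s hs; exists n; apply/asboolP; exact: hn.
  case: (ex_minnP hex) => n /asboolP hn hmin.
  case: n hn hmin => [|n] hn hmin; first by move: hn => /=; lra.
  have hn' : ~ Rlt (pow q n) s.
    move=> h; have := hmin n (introT (asboolP _) h); rewrite ltnn //.
  exists (pi ^+ n); split; first exact: expf_neq0.
  rewrite (avX hna) -/q; split; first by apply: Rnot_lt_le.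
  move: hn => /= hn; apply: (Rmult_le_reg_l q) => //.
  have -> : Rmult q (Rdiv s q) = s.
    by rewrite /Rdiv Rmult_comm Rmult_assoc Rinv_l ?Rmult_1_r //; lra.
  lra.
have hex : exists n, `[< Rle (Rmult (pow q n) s) R1 >].
  have [n hn] := @pow_small q q0 hpi1 (Rinv s) ltac:(apply: Rinv_0_lt_compat; lra).
  exists n; apply/asboolP; have := hn n (leqnn n).
  move=> h; apply: Rle_trans (Rmult_le_compat_r _ _ _ _ (Rlt_le _ _ h)) _; first lra.
  rewrite Rinv_l; lra.
case: (ex_minnP hex) => n /asboolP hn hmin.
case: n hn hmin => [|n] hn hmin; first by move: hn => /=; lra.
have hn' : ~ Rle (Rmult (pow q n) s) R1.
  move=> h; have := hmin n (introT (asboolP _) h); rewrite ltnn //.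
have hn2 := Rnot_le_lt _ _ hn'.
have hqn := pow_lt q n hpi0.
exists ((pi ^+ n.+1)^-1); split; first by rewrite invr_eq0; exact: expf_neq0.
rewrite (avV hna); last exact: expf_neq0.
rewrite (avX hna) -/q /=; move: hn => /= hn.
have hqq : Rlt R0 (Rmult q (pow q n)) by apply: Rmult_lt_0_compat.
split.
  apply: (Rmult_le_reg_l (Rmult q (pow q n))) => //; rewrite Rinv_r; lra.
apply: (Rmult_le_reg_l (Rmult q (pow q n))) => //; rewrite Rinv_r; last lra.
rewrite /Rdiv; have -> : Rmult (Rmult q (pow q n)) (Rmult s (Rinv q)) = Rmult (pow q n) s.
  rewrite (Rmult_comm q) !Rmult_assoc; congr Rmult.
  by rewrite (Rmult_comm s) -Rmult_assoc Rinv_r ?Rmult_1_l //; lra.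
lra.
Qed.

Lemma part2 (k : fieldType) (av : k -> R) (hk : local_field av)
  (X : Type) (opn : (X -> Prop) -> Prop) (hX : is_topology opn)
  (V : lmodType k) (nV : V -> R) (rho : (X -> k) -> V -> V) :
     banach_space_norm av nV ->
     (forall f, Cbd opn av f -> bounded_op nV (rho f)) ->
     (forall f g, Cbd opn av f -> Cbd opn av g ->
        rho (fun x => f x + g x) = (fun v => rho f v + rho g v)) ->
     (forall f g, Cbd opn av f -> Cbd opn av g ->
        rho (fun x => f x * g x) = (fun v => rho f (rho g v))) ->
     (forall (a : k) f, Cbd opn av f -> rho (fun x => a * f x) = (fun v => a *: rho f v)) ->
     rho (fun _ => 1) = (fun v => v) ->
     (forall f g, Cbd opn av f -> Cbd opn av g -> rho f = rho g -> f = g) ->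
     (forall T, bounded_op nV T -> ~ (exists f, Cbd opn av f /\ rho f = T) ->
        exists r, Rlt R0 r /\ forall S, bounded_op nV S ->
          opnorm_lt nV (fun v => S v - T v) r -> ~ (exists f, Cbd opn av f /\ rho f = S)) ->
     exists C, forall f, Cbd opn av f -> forall r, supnorm_le av f r ->
       opnorm_le nV (rho f) (Rmult C r).
Proof.
case: hk => hna hcomp [pi [hpi0 hpi1 _]] _.
move=> [n0 nz nD nZ ncomp] hbd rhoD rhoM rhoZ rho1 rhoI hcl.
have nN : forall x, nV (- x) = nV x.
  move=> x; rewrite -scaleN1r nZ.
  have := avN hna 1; rewrite (av1 hna) => ->; lra.
have nV0 : nV 0 = R0 by apply/nz.
have ntri : forall x y z, Rle (nV (x - z)) (Rmax (nV (x - y)) (nV (y - z))).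
  by move=> x y z; have := nD (x - y) (y - z); rewrite addrA subrK.
have nB : forall x y, Rle (nV (x - y)) (Rmax (nV x) (nV y)).
  by move=> x y; rewrite -(nN y); apply: nD.
have maxM : forall r s t, Rle R0 t -> Rle (Rmax (Rmult r t) (Rmult s t)) (Rmult (Rmax r s) t).
  move=> r s t ht; apply: Rmax_lub; apply: Rmult_le_compat_r => //.
    exact: Rmax_l.
  exact: Rmax_r.
pose N := fun (T : V -> V) (r : R) => Rle R0 r /\ opnorm_le nV T r.
have Nge0 : forall a r, N a r -> Rle R0 r by move=> a r [].
have Nmono : forall a r s, N a r -> Rle r s -> N a s.
  move=> a r s [h0 h] hrs; split; first lra.
  move=> v; apply: Rle_trans (h v) _; apply: Rmult_le_compat_r => //.
have Nadd : forall a b r s, N a r -> N b s -> N (a + b) (Rmax r s).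
  move=> a b r s [ha0 ha] [hb0 hb]; split; first by apply: Rle_trans ha0 (Rmax_l _ _).
  move=> v; change (Rle (nV (a v + b v)) (Rmult (Rmax r s) (nV v))).
  apply: Rle_trans (nD _ _) _; apply: Rle_trans (maxM _ _ _ (n0 v)).
  apply: Rmax_lub.
    by apply: Rle_trans (ha v) (Rmax_l _ _).
  by apply: Rle_trans (hb v) (Rmax_r _ _).
have Nopp : forall a r, N a r -> N (- a) r.
  move=> a r [h0 h]; split => // v; change (Rle (nV (- a v)) (Rmult r (nV v))).
  by rewrite nN.
have N0 : N 0 R0.
  split; first by apply: Rle_refl.
  move=> v; change (Rle (nV 0) (Rmult R0 (nV v))); rewrite nV0 Rmult_0_l; apply: Rle_refl.
have Nzero : forall a, (forall r, Rlt R0 r -> N a r) -> a = 0.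
  move=> a h; apply: functional_extensionality => v; apply/nz.
  apply: Rle_antisym; last exact: n0.
  apply: le_of_eps => eta he; rewrite Rplus_0_l.
  have hv := n0 v.
  have hpos : Rlt R0 (Rdiv eta (nV v + 1)) by apply: Rdiv_lt_0_compat; lra.
  have [_ hb] := h _ hpos; apply: Rle_trans (hb v) _.
  have : Rmult (Rdiv eta (nV v + 1)) (nV v + 1) = eta.
    by rewrite /Rdiv Rmult_assoc Rinv_l ?Rmult_1_r //; lra.
  nra.
have Ncomp : forall u : nat -> (V -> V),
  (forall eps, Rlt R0 eps -> exists M : nat, forall m n, leq M m -> leq M n -> N (u m - u n) eps) ->
  exists l, forall eps, Rlt R0 eps -> exists M : nat, forall n, leq M n -> N (u n - l) eps.
  move=> u hu.
  have hl : forall v, exists l, converges_to (fun x y : V => nV (x - y)) (fun n => u n v) l.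
    move=> v; apply: ncomp => eps he.
    have hv := n0 v.
    have hpos : Rlt R0 (Rdiv eps (nV v + 1)) by apply: Rdiv_lt_0_compat; lra.
    have [M hM] := hu _ hpos; exists M => m n hm hn.
    have [_ hb] := hM m n hm hn; apply: Rle_lt_trans (hb v) _.
    have : Rmult (Rdiv eps (nV v + 1)) (nV v + 1) = eps.
      by rewrite /Rdiv Rmult_assoc Rinv_l ?Rmult_1_r //; lra.
    nra.
  have [l hl'] := boolp.choice hl.
  exists l => eps he; have [M hM] := hu eps he; exists M => n hn.
  split; first lra.
  move=> v; change (Rle (nV (u n v - l v)) (Rmult eps (nV v))).
  apply: le_of_max_eps; first by apply: Rmult_le_pos; [lra | apply: n0].
  move=> eta heta; have [M' hM'] := hl' v eta heta.
  set m := maxn M M'.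
  apply: Rle_trans (ntri _ (u m v) _) _; apply: Rmax_lub.
    have [_ hb] := hM n m hn (leq_maxl _ _).
    by apply: Rle_trans (hb v) (Rmax_l _ _).
  by apply: Rle_trans (Rmax_r _ _); left; apply: hM'; apply: leq_maxr.
have phiM' : forall f g r s, Cbd opn av f -> Cbd opn av g -> N (rho f) r -> N (rho g) s ->
    N (rho (fun x => f x * g x)) (Rmult r s).
  move=> f g r s hf hg [hr0 hr] [hs0 hs]; rewrite rhoM //; split; first exact: Rmult_le_pos.
  move=> v; apply: Rle_trans (hr _) _; rewrite Rmult_assoc.
  by apply: Rmult_le_compat_l.
have phiZ' : forall (a : k) f r, Cbd opn av f -> N (rho f) r ->
    N (rho (fun x => a * f x)) (Rmult (av a) r).
  move=> a f r hf [hr0 hr]; rewrite rhoZ //.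
  have ha := av_ge0 hna a.
  split; first exact: Rmult_le_pos.
  by move=> v; rewrite nZ Rmult_assoc; apply: Rmult_le_compat_l.
have phiB : forall f, Cbd opn av f -> exists r, N (rho f) r.
  move=> f hf; have [_ _ [c hc]] := hbd f hf; exists (Rmax c R0); split.
    exact: Rmax_r.
  move=> v; apply: Rle_trans (hc v) _; apply: Rmult_le_compat_r; [exact: n0 | exact: Rmax_l].
have phiD : forall f g, Cbd opn av f -> Cbd opn av g -> rho (fun x => f x + g x) = rho f + rho g.
  by move=> f g hf hg; rewrite rhoD.
have phiC : forall l, (forall eps, Rlt R0 eps -> exists f, Cbd opn av f /\ N (rho f - l) eps) ->
    exists h, Cbd opn av h /\ rho h = l.
  move=> l hl.
  have hD : forall eps, Rlt R0 eps -> exists f, Cbd opn av f /\ bounded_op nV (rho f) /\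
      forall z, Rle (nV (rho f z - l z)) (Rmult eps (nV z)).
    move=> eps he; have [f [hf [_ hN]]] := hl eps he.
    by exists f; split => //; split; [exact: hbd | exact: hN].
  have lbd : bounded_op nV l.
    split.
    - move=> x y; apply/eqP; rewrite -subr_eq0; apply/eqP; apply/nz.
      apply: Rle_antisym; last exact: n0.
      apply: le_of_eps => eta he; rewrite Rplus_0_l.
      set S := Rplus (Rplus (Rplus (nV x) (nV y)) (nV (x + y))) R1.
      have hS : Rlt R0 S by rewrite /S; have := n0 x; have := n0 y; have := n0 (x + y); lra.
      have [f [hf [[hTa _ _] hz]]] := hD (Rdiv eta S) ltac:(apply: Rdiv_lt_0_compat; lra).
      have hSe : Rmult (Rdiv eta S) S = eta.
        by rewrite /Rdiv Rmult_assoc Rinv_l ?Rmult_1_r //; lra.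
      have hle : forall z, Rle (nV z) S -> Rle (Rmult (Rdiv eta S) (nV z)) eta.
        move=> z hzS; rewrite -{2}hSe; apply: Rmult_le_compat_l => //.
        left; apply: Rdiv_lt_0_compat; lra.
      apply: Rle_trans (ntri _ (rho f (x + y)) _) _.
      apply: Rmax_lub.
        rewrite -opprB nN; apply: Rle_trans (hz _) _; apply: hle.
        rewrite /S; have := n0 x; have := n0 y; lra.
      rewrite hTa opprD addrACA; apply: Rle_trans (nD _ _) _.
      apply: Rmax_lub; apply: Rle_trans (hz _) _; apply: hle;
        rewrite /S; have := n0 x; have := n0 y; have := n0 (x + y); lra.
    - move=> a x; apply/eqP; rewrite -subr_eq0; apply/eqP; apply/nz.
      apply: Rle_antisym; last exact: n0.
      apply: le_of_eps => eta he; rewrite Rplus_0_l.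
      have ha := av_ge0 hna a; have hx := n0 x.
      set S := Rplus (Rmult (av a) (nV x)) R1.
      have hS : Rlt R0 S by rewrite /S; nra.
      have [f [hf [[_ hTs _] hz]]] := hD (Rdiv eta S) ltac:(apply: Rdiv_lt_0_compat; lra).
      have hSe : Rmult (Rdiv eta S) S = eta.
        by rewrite /Rdiv Rmult_assoc Rinv_l ?Rmult_1_r //; lra.
      have hep : Rle R0 (Rdiv eta S) by left; apply: Rdiv_lt_0_compat; lra.
      have hfin : Rle (Rmult (Rdiv eta S) (Rmult (av a) (nV x))) eta.
        rewrite -{2}hSe; apply: Rmult_le_compat_l => //; rewrite /S; lra.
      apply: Rle_trans (ntri _ (rho f (a *: x)) _) _.
      apply: Rmax_lub.
        rewrite -opprB nN; apply: Rle_trans (hz _) _; rewrite nZ; exact: hfin.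
      rewrite hTs -scalerBr nZ.
      apply: Rle_trans _ hfin.
      rewrite (Rmult_comm (Rdiv eta S)) Rmult_assoc; apply: Rmult_le_compat_l => //; rewrite Rmult_comm; exact: hz.
    - have [f [hf [[_ _ [c hc]] hz]]] := hD R1 Rlt_0_1.
      exists (Rmax c R1) => v.
      have -> : l v = rho f v - (rho f v - l v) by rewrite opprB addrC subrK.
      apply: Rle_trans (nB _ _) _; apply: Rle_trans (maxM _ _ _ (n0 v)).
      apply: Rmax_lub.
        by apply: Rle_trans (hc v) (Rmax_l _ _).
      by apply: Rle_trans (hz v) (Rmax_r _ _).
  apply: NNPP => hno.
  have [r [hr hS]] := hcl l lbd hno.
  have [f [hf [_ hN]]] := hl (Rdiv r 2) ltac:(lra).
  apply: (hS (rho f) (hbd f hf)); last by exists f.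
  exists (Rdiv r 2); split; first lra.
  exact: hN.
have [r0 [M [hr0 [hM hb]]]] := core_bound hna hcomp hpi0 hpi1 hX Nge0 Nmono Nadd Nopp N0 Nzero Ncomp
   phiD phiM' phiZ' phiB rhoI phiC.
exists (Rdiv M (Rmult r0 (av pi))) => f hf t ht.
have hq : Rlt R0 (Rmult r0 (av pi)) by apply: Rmult_lt_0_compat.
have hC : Rle R0 (Rdiv M (Rmult r0 (av pi))) by apply: Rmult_le_pos => //; left; apply: Rinv_0_lt_compat.
case: (Rle_lt_dec t R0) => htpos.
  have hf0 : f = (fun _ => 0).
    apply: functional_extensionality => x; apply/(av_eq0 hna).
    by apply: Rle_antisym; [apply: Rle_trans (ht x) htpos | apply: av_ge0].
  have hrho0 : rho (fun _ => 0) = (fun _ => 0).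
    have := rhoZ 0 _ (Cbd_const hna hX 1).
    have -> : (fun _ : X => (0 : k) * 1) = (fun _ => 0).
      by apply: functional_extensionality => x; rewrite mul0r.
    move=> ->; apply: functional_extensionality => v; exact: scale0r.
  move=> v; rewrite hf0 hrho0 nV0.
  case: (classic (exists x : X, True)) => [[x _]|hX0].
    have := ht x; have := av_ge0 hna (f x) => h1 h2.
    have -> : t = R0 by lra.
    rewrite Rmult_0_r Rmult_0_l; apply: Rle_refl.
  have e1 : (fun _ : X => (1 : k)) = (fun _ => 0).
    apply: functional_extensionality => x; exfalso; apply: hX0; by exists x.
  have : v = 0.
    have := congr1 (fun F => F v) rho1; rewrite /= e1 hrho0 => <- //.
  move=> ->; rewrite nV0 Rmult_0_r; apply: Rle_refl.
have [a [a0 [ha1 ha2]]] := pow_interval hna hpi0 hpi1 (Rdiv_lt_0_compat t r0 htpos hr0).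
have hra : Rle t (Rmult (av a) r0).
  have e : Rmult (Rdiv t r0) r0 = t by rewrite /Rdiv Rmult_assoc Rinv_l ?Rmult_1_r //; lra.
  by have := Rmult_le_compat_r _ _ _ (Rlt_le _ _ hr0) ha1; rewrite e.
have hsb : SB av f (Rmult (av a) r0) by move=> x; apply: Rle_trans (ht x) hra.
have [_ hN] := scale_bound hna hX phiZ' hb a0 hf hsb.
move=> v; apply: Rle_trans (hN v) _; apply: Rmult_le_compat_r; first exact: n0.
have -> : Rmult (Rdiv M (Rmult r0 (av pi))) t = Rmult M (Rdiv (Rdiv t r0) (av pi)).
  rewrite /Rdiv Rinv_mult; nra.
rewrite Rmult_comm; apply: Rmult_le_compat_l => //.
Qed.

End File_P6.

Unset Implicit Arguments.
Local Open Scope ring_scope.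
Theorem mainTheorem14 (k : fieldType) (av : k -> R) (hk : local_field av)
  (X : Type) (opn : (X -> Prop) -> Prop) (hX : is_topology opn) :
  (* general statement *)
  (forall (A : algType k) (nA : A -> R) (phi : (X -> k) -> A),
     banach_algebra_norm av nA ->
     (forall f g, Cbd opn av f -> Cbd opn av g -> phi (fun x => f x + g x) = phi f + phi g) ->
     (forall f g, Cbd opn av f -> Cbd opn av g -> phi (fun x => f x * g x) = phi f * phi g) ->
     (forall (a : k) f, Cbd opn av f -> phi (fun x => a * f x) = a *: phi f) ->
     phi (fun _ => 1) = 1 ->
     (forall f g, Cbd opn av f -> Cbd opn av g -> phi f = phi g -> f = g) ->
     closed_in_normed nA (fun y => exists f, Cbd opn av f /\ phi f = y) ->
     (* phi is continuous for the sup norm on C_bd(X,k) *)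
     forall f, Cbd opn av f -> forall eps, Rlt R0 eps ->
       exists delta, Rlt R0 delta /\
         forall g, Cbd opn av g -> supnorm_le av (fun x => f x - g x) delta ->
           Rle (nA (phi f - phi g)) eps)
  /\
  (* the particular case A = B_k(V) *)
  (forall (V : lmodType k) (nV : V -> R) (rho : (X -> k) -> V -> V),
     banach_space_norm av nV ->
     (forall f, Cbd opn av f -> bounded_op nV (rho f)) ->
     (forall f g, Cbd opn av f -> Cbd opn av g ->
        rho (fun x => f x + g x) = (fun v => rho f v + rho g v)) ->
     (forall f g, Cbd opn av f -> Cbd opn av g ->
        rho (fun x => f x * g x) = (fun v => rho f (rho g v))) ->
     (forall (a : k) f, Cbd opn av f -> rho (fun x => a * f x) = (fun v => a *: rho f v)) ->
     rho (fun _ => 1) = (fun v => v) ->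
     (forall f g, Cbd opn av f -> Cbd opn av g -> rho f = rho g -> f = g) ->
     (* image closed in B_k(V) for the operator norm *)
     (forall T, bounded_op nV T -> ~ (exists f, Cbd opn av f /\ rho f = T) ->
        exists r, Rlt R0 r /\ forall S, bounded_op nV S ->
          opnorm_lt nV (fun v => S v - T v) r -> ~ (exists f, Cbd opn av f /\ rho f = S)) ->
     (* rho is bounded: ||rho f|| <= C ||f||_sup *)
     exists C, forall f, Cbd opn av f -> forall r, supnorm_le av f r ->
       opnorm_le nV (rho f) (Rmult C r)).

Proof.
split.
  exact: (@part1 k av hk X opn hX).
exact: (@part2 k av hk X opn hX).
Qed.
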